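(* In the left-censored disclosure game described in the context, reparametrize by $\gamma=p/q>1$ and $\kappa=1/(1-p-q)>1$ (so that $(\gamma,\kappa)$ determines $(p,q)$), and consider, for fixed $e\in E$ and $\pi_0$, $$V(e)=\frac{1}{1+\frac{1-\pi_0}{\pi_0}\frac{p-\alpha}{q-\alpha}\left(\frac{q}{p}\right)^{N(e)+1}},\quad \alpha=\frac{1-\sqrt{1-4pq}}{2},\quad N(e)=\max_{0\le k\le L(e)}D(e|_k),$$ the sender's equilibrium value. Then: (1) $V(e)$ is decreasing in $\kappa$ (holding $\gamma$ fixed), for all $e\in E$. (2) If $N(e)=0$, $V(e)$ is decreasing in $\gamma$ (holding $\kappa$ fixed). If $N(e)>0$, there exists $\hat\gamma>1$ such that $V(e)$ is increasing in $\gamma$ when $\gamma>\hat\gamma$ (holding $\kappa$ fixed, for any $\kappa>1$), and the threshold $\hat\gamma\to1$ as $N(e)\to\infty$. (3) Fixing $e\in E$ and $q\in(0,\tfrac12)$, there exists $\hat p\in[q,1-q)$ such that, as a function of $p\in(q,1-q)$, $V(e)$ is increasing in $p$ for $p<\hat p$ and decreasing in $p$ for $p>\hat p$; moreover $\hat p$ is non-decreasing in $N(e)$.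
   Context: Left-censored disclosure game. A state $\omega\in\{G,B\}$ has prior probability $\pi_0\in(0,1)$ on $G$. The evidence space $E=\bigcup_{t\ge0}\{g,b\}^t$ is the set of finite sequences of signals in $\{g,b\}$, including the empty sequence $\emptyset$. For $e\in E$: $L(e)$ is its length, $G(e)$ and $B(e)$ the numbers of $g$'s and $b$'s, $D(e)=G(e)-B(e)$; for $e=(s_1,\dots,s_L)$ and $0<k\le L$, $e|_k=(s_{L-k+1},\dots,s_L)$, and $e|_0=\emptyset$. Parameters satisfy $1>p>q>0$ and $p+q<1$; evidence is drawn from $F_\omega$ with $F_G(e)=(1-p-q)p^{G(e)}q^{B(e)}$, $F_B(e)=(1-p-q)p^{B(e)}q^{G(e)}$. The disclosure rule allows a sender with evidence $e$ to send any message $e|_k$, $0\le k\le L(e)$. The receiver's optimal action equals his posterior belief on $G$, and the sender's payoff is the receiver's action. In this game the sender's value function (her payoff in any truth-leaning equilibrium) is given by the displayed formula for $V(e)$; $\gamma$ measures signal informativeness and $\kappa$ is the expected length of evidence. *)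

(* Defs.v *)
From Stdlib Require Import Reals Lra Lia ZArith List.
Open Scope R_scope.

(* Evidence: finite sequences of signals; true = g, false = b. *)
Definition evidence := list bool.

Definition Gcnt (e : evidence) : nat := length (filter (fun s : bool => s) e).
Definition Bcnt (e : evidence) : nat := length (filter (fun s : bool => negb s) e).

Definition Dz (e : evidence) : Z := (Z.of_nat (Gcnt e) - Z.of_nat (Bcnt e))%Z.

Definition suffix (e : evidence) (k : nat) : evidence := skipn (length e - k) e.

(* N(e) = max_{0 <= k <= L(e)} D(e|_k)  (the k = 0 term gives 0, so N(e) >= 0) *)
Definition Ncap (e : evidence) : Z :=
  fold_right Z.max (Dz (suffix e 0))
    (map (fun k => Dz (suffix e k)) (seq 0 (S (length e)))).

Definition alpha (p q : R) : R := (1 - sqrt (1 - 4 * p * q)) / 2.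

Definition V (pi0 p q : R) (e : evidence) : R :=
  / (1 + (1 - pi0) / pi0 * ((p - alpha p q) / (q - alpha p q))
          * powerRZ (q / p) (Ncap e + 1)).

(* Reparametrization gamma = p/q, kappa = 1/(1-p-q) *)
Definition p_of (gamma kappa : R) : R := gamma * (1 - / kappa) / (1 + gamma).
Definition q_of (gamma kappa : R) : R := (1 - / kappa) / (1 + gamma).

Definition Vgk (pi0 gamma kappa : R) (e : evidence) : R :=
  V pi0 (p_of gamma kappa) (q_of gamma kappa) e.

(* Main.v *)
Require Import Defs.
From Stdlib Require Import Reals Lra Lia ZArith List Classical.
From Coquelicot Require Import Coquelicot.
Open Scope R_scope.


Lemma Ncap_nonneg e : (0 <= Ncap e)%Z.
Proof.
  unfold Ncap.
  assert (H0 : Dz (suffix e 0) = 0%Z).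
  { unfold suffix. rewrite Nat.sub_0_r, skipn_all. reflexivity. }
  rewrite H0. induction (map _ _) as [|x l IH]; simpl; lia.
Qed.

Lemma s_facts p q : 0 < q -> q < p -> p + q < 1 ->
  let s := sqrt (1 - 4*p*q) in 0 < s /\ s*s = 1 - 4*p*q /\ 1 - 2*q < s /\ s < 1.
Proof.
  intros Hq Hqp Hpq s.
  assert (Hpos : 0 < 1 - 4*p*q) by nra.
  assert (Hs : s*s = 1-4*p*q) by (apply sqrt_sqrt; lra).
  assert (Hs0 : 0 < s) by (apply sqrt_lt_R0; lra).
  repeat split; try lra; nra.
Qed.

Definition Xf (p q : R) (n : nat) : R :=
  let b := (1 + sqrt (1 - 4*p*q)) / 2 in
  (b - q)^2 / (b * (1 - p - q)) * (q/p)^n.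

Lemma Xf_pos p q n : 0 < q -> q < p -> p + q < 1 -> 0 < Xf p q n.
Proof.
  intros Hq Hqp Hpq. destruct (s_facts p q Hq Hqp Hpq) as (H1&H2&H3&H4).
  unfold Xf. set (s := sqrt _) in *.
  apply Rmult_lt_0_compat.
  - apply Rdiv_lt_0_compat. apply pow_lt; lra. apply Rmult_lt_0_compat; lra.
  - apply pow_lt. apply Rdiv_lt_0_compat; lra.
Qed.

Lemma V_form pi0 p q e : 0 < q -> q < p -> p + q < 1 ->
  V pi0 p q e = / (1 + (1 - pi0)/pi0 * Xf p q (Z.to_nat (Ncap e))).
Proof.
  intros Hq Hqp Hpq. destruct (s_facts p q Hq Hqp Hpq) as (H1&H2&H3&H4).
  unfold V, Xf, alpha. set (s := sqrt _) in *. set (n := Z.to_nat (Ncap e)).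
  assert (HN : (Ncap e + 1)%Z = Z.of_nat (S n)).
  { unfold n. pose proof (Ncap_nonneg e). lia. }
  rewrite HN, <- pow_powerRZ. simpl pow.
  f_equal. f_equal. rewrite <- Rmult_assoc, <- Rmult_assoc. f_equal.
  rewrite Rmult_assoc. f_equal.
  set (b := (1+s)/2).
  assert (Hb : b*b - b + p*q = 0) by (unfold b; nra).
  assert (E1 : (p - (1-s)/2) * q * (b - p) - (b - q) * (q - (1-s)/2) * p = (q-p)*(b*b-b+p*q))
    by (unfold b; field).
  assert (E2 : (b-q)*(b-p) = b*(1-p-q)) by nra.
  assert (bp : b - p > 0) by (unfold b; lra).
  assert (qa : q - (1-s)/2 > 0) by lra.
  assert (b > 0) by (unfold b; lra).
  rewrite <- E2. rewrite Hb, Rmult_0_r in E1.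
  field_simplify_eq; try lra.
Qed.


Lemma Vcmp c X1 X2 : 0 < c -> 0 < X1 -> X1 < X2 -> / (1 + c * X2) < / (1 + c * X1).
Proof.
  intros. apply Rinv_lt_contravar.
  - apply Rmult_lt_0_compat; nra.
  - nra.
Qed.

Lemma R_mono g q1 q2 : 1 < g -> 0 < q1 -> q1 < q2 -> g*q2 + q2 < 1 ->
  0 < (g*q1 - alpha (g*q1) q1) / (q1 - alpha (g*q1) q1) /\
  (g*q1 - alpha (g*q1) q1) / (q1 - alpha (g*q1) q1) <
  (g*q2 - alpha (g*q2) q2) / (q2 - alpha (g*q2) q2).
Proof.
  intros Hg Hq1 Hq12 Hm.
  assert (Hq1p : q1 < g*q1) by nra. assert (Hq2p : q2 < g*q2) by nra.
  assert (g*q1 + q1 < 1) by nra.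
  destruct (s_facts (g*q1) q1) as (A1&A2&A3&A4); try lra.
  destruct (s_facts (g*q2) q2) as (B1&B2&B3&B4); try lra.
  unfold alpha.
  set (s1 := sqrt (1 - 4 * (g*q1) * q1)) in *.
  set (s2 := sqrt (1 - 4 * (g*q2) * q2)) in *.
  assert (Hs : s2 < s1).
  { apply sqrt_lt_1_alt. split; nra. }
  set (a1 := (1 - s1)/2). set (a2 := (1-s2)/2).
  assert (E1 : a1 * (1+s1) = 2*g*q1*q1) by (unfold a1; replace ((1-s1)/2*(1+s1)) with ((1 - s1*s1)/2) by field; rewrite A2; field).
  assert (E2 : a2 * (1+s2) = 2*g*q2*q2) by (unfold a2; replace ((1-s2)/2*(1+s2)) with ((1 - s2*s2)/2) by field; rewrite B2; field).
  assert (K : a1 * q2 < a2 * q1).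
  { assert (a1*q2*((1+s1)*(1+s2)) < a2*q1*((1+s1)*(1+s2))).
    { replace (a1*q2*((1+s1)*(1+s2))) with (2*g*q1*q1*q2*(1+s2)) by (rewrite <- E1; ring).
      replace (a2*q1*((1+s1)*(1+s2))) with (2*g*q2*q2*q1*(1+s1)) by (rewrite <- E2; ring).
      assert (0 < 2*g*q1*q2) by (repeat apply Rmult_lt_0_compat; lra).
      assert (q1 * (1+s2) < q2*(1+s1)) by nra. nra. }
    apply Rmult_lt_reg_r with ((1+s1)*(1+s2)); [nra|lra]. }
  assert (D1 : 0 < q1 - a1) by (unfold a1; lra).
  assert (D2 : 0 < q2 - a2) by (unfold a2; lra).
  assert (N1 : 0 < g*q1 - a1) by (unfold a1; lra).
  split.
  - apply Rdiv_lt_0_compat; lra.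
  - apply Rmult_lt_reg_r with ((q1-a1)*(q2-a2)). nra.
    replace ((g * q1 - a1) / (q1 - a1) * ((q1 - a1) * (q2 - a2))) with ((g*q1-a1)*(q2-a2)) by (field; lra).
    replace ((g * q2 - a2) / (q2 - a2) * ((q1 - a1) * (q2 - a2))) with ((g*q2-a2)*(q1-a1)) by (field; lra).
    nra.
Qed.

Lemma part1 pi0 : 0 < pi0 < 1 ->
  (forall (e : evidence) (gamma : R), 1 < gamma ->
     forall k1 k2 : R, 1 < k1 -> k1 < k2 ->
       Vgk pi0 gamma k2 e < Vgk pi0 gamma k1 e).
Proof.
  intros Hpi e g Hg k1 k2 Hk1 Hk12.
  assert (Ep : forall k, p_of g k = g * q_of g k) by (intros; unfold p_of, q_of, Rdiv; ring).
  unfold Vgk. rewrite !Ep. unfold V.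
  assert (Hi1 : 0 < / k1 < 1).
  { split. apply Rinv_0_lt_compat; lra. rewrite <- Rinv_1. apply Rinv_lt_contravar; lra. }
  assert (Hi2 : / k2 < / k1) by (apply Rinv_lt_contravar; [apply Rmult_lt_0_compat; lra | lra]).
  assert (Hi3 : 0 < / k2) by (apply Rinv_0_lt_compat; lra).
  assert (Hq1 : 0 < q_of g k1) by (unfold q_of; apply Rdiv_lt_0_compat; lra).
  assert (Hq12 : q_of g k1 < q_of g k2).
  { unfold q_of. apply Rmult_lt_compat_r. apply Rinv_0_lt_compat; lra. lra. }
  assert (Hm : g * q_of g k2 + q_of g k2 < 1).
  { replace (g * q_of g k2 + q_of g k2) with (1 - / k2) by (unfold q_of; field; lra). lra. }
  destruct (R_mono g _ _ Hg Hq1 Hq12 Hm) as [HR0 HR].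
  assert (Eq : forall k, 0 < q_of g k -> q_of g k / (g * q_of g k) = / g)
    by (intros; field; lra).
  rewrite !Eq by lra.
  set (P := powerRZ (/ g) (Ncap e + 1)).
  assert (HP : 0 < P) by (apply powerRZ_lt, Rinv_0_lt_compat; lra).
  rewrite !(Rmult_assoc ((1 - pi0) / pi0)).
  apply Vcmp.
  - apply Rdiv_lt_0_compat; lra.
  - apply Rmult_lt_0_compat; lra.
  - apply Rmult_lt_compat_r; lra.
Qed.


Definition Sq m d := sqrt (1 - m^2 + d^2).
Definition phi m n d := 2 * ln ((1 + Sq m d - m + d)/2) - ln ((1 + Sq m d)/2)
   + INR n * ln (m - d) - INR n * ln (m + d).
Definition Dphi m n d := (d / Sq m d + 1) / ((1 + Sq m d - m + d)/2)
   - (d / (2 * Sq m d)) / ((1 + Sq m d)/2) - INR n / (m - d) - INR n / (m + d).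

Lemma phi_deriv m n d : 0 < m < 1 -> 0 < d < m -> is_derive (phi m n) d (Dphi m n d).
Proof.
  intros Hm Hd.
  assert (HS : 0 < 1 - m^2 + d^2) by nra.
  assert (HSp : 0 < sqrt (1 - m^2 + d^2)) by (apply sqrt_lt_R0; lra).
  assert (HSm : m < 1 + sqrt (1 - m^2 + d^2)) by lra.
  unfold phi, Dphi, Sq. auto_derive.
  all: try replace (1 - m * (m * 1) + d * (d * 1)) with (1 - m^2 + d^2) by ring.
  all: set (S := sqrt (1 - m^2 + d^2)) in *.
  - repeat split; lra.
  - field. repeat split; lra.
Qed.

Lemma lnXf_phi m n d : 0 < m < 1 -> 0 < d < m ->
  ln (Xf ((m+d)/2) ((m-d)/2) n) = phi m n d - ln (1 - m).
Proof.
  intros Hm Hd.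
  assert (HS : 0 < 1 - m^2 + d^2) by nra.
  assert (HSp : 0 < Sq m d) by (apply sqrt_lt_R0; lra).
  assert (Hlt : 1 - 2 * ((m-d)/2) < Sq m d).
  { destruct (s_facts ((m+d)/2) ((m-d)/2)) as (_&_&H&_); try lra.
    replace (1 - 4 * ((m + d) / 2) * ((m - d) / 2)) with (1 - m^2 + d^2) in H by field.
    exact H. }
  unfold Xf, phi.
  replace (1 - 4 * ((m + d) / 2) * ((m - d) / 2)) with (1 - m^2 + d^2) by field.
  fold (Sq m d). set (S := Sq m d) in *.
  replace ((1 + S) / 2 - (m - d) / 2) with ((1 + S - m + d)/2) by field.
  replace (1 - (m + d) / 2 - (m - d) / 2) with (1 - m) by field.
  replace ((m - d) / 2 / ((m + d) / 2)) with ((m - d) / (m + d)) by (field; lra).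
  assert (HA : 0 < (1 + S - m + d)/2) by lra.
  assert (HB : 0 < (1 + S)/2) by lra.
  set (A := (1 + S - m + d)/2) in *. set (B := (1 + S)/2) in *.
  assert (HC : 0 < (m - d)/(m + d)) by (apply Rdiv_lt_0_compat; lra).
  rewrite (ln_mult (A^2/(B*(1-m))) (((m - d)/(m + d))^n)).
  2:{ apply Rdiv_lt_0_compat. apply pow_lt; lra. apply Rmult_lt_0_compat; lra. }
  2:{ apply pow_lt; lra. }
  rewrite (ln_div (A^2) (B*(1-m))).
  2:{ apply pow_lt; lra. }
  2:{ apply Rmult_lt_0_compat; lra. }
  rewrite (ln_mult B (1-m)) by lra.
  rewrite (ln_pow A 2) by lra.
  rewrite (ln_pow ((m - d)/(m + d)) n) by lra.
  rewrite (ln_div (m-d) (m+d)) by lra.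
  simpl INR. ring.
Qed.

Lemma div_lt_div a b c e : 0 < b -> 0 < e -> a * e < c * b -> a / b < c / e.
Proof.
  intros Hb He H. apply Rmult_lt_reg_r with (b*e). nra.
  replace (a / b * (b * e)) with (a * e) by (field; lra).
  replace (c / e * (b * e)) with (c * b) by (field; lra). exact H.
Qed.

Lemma div_le_div a b c e : 0 < b -> 0 < e -> a * e <= c * b -> a / b <= c / e.
Proof.
  intros Hb He H. apply Rmult_le_reg_r with (b*e). nra.
  replace (a / b * (b * e)) with (a * e) by (field; lra).
  replace (c / e * (b * e)) with (c * b) by (field; lra). exact H.
Qed.

Lemma Sq_facts m d : 0 < m < 1 -> 0 < d < m -> 0 < Sq m d /\ d < Sq m d /\ Sq m d * Sq m d = 1 - m^2 + d^2.
Proof.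
  intros Hm Hd. assert (HS : 0 < 1 - m^2 + d^2) by nra.
  assert (E : Sq m d * Sq m d = 1 - m^2 + d^2) by (apply sqrt_sqrt; lra).
  assert (P : 0 < Sq m d) by (apply sqrt_lt_R0; lra).
  repeat split; try lra. nra.
Qed.

Lemma Dphi_pos0 m d : 0 < m < 1 -> 0 < d < m -> 0 < Dphi m 0 d.
Proof.
  intros Hm Hd. destruct (Sq_facts m d Hm Hd) as (S0&S1&S2).
  unfold Dphi. set (S := Sq m d) in *. simpl INR.
  assert (Hy : 0 < (1 + S - m + d)/2) by lra.
  assert (Hyb : (1 + S - m + d)/2 < (1 + S)/2) by lra.
  assert (Hu : 0 < d / S) by (apply Rdiv_lt_0_compat; lra).
  replace (d / (2*S)) with ((d/S)/2) by (field; lra).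
  assert ((d/S)/2/((1+S)/2) < (d/S+1)/((1 + S - m + d)/2)).
  { apply div_lt_div; try lra. nra. }
  replace (0 / (m - d)) with 0 by (field; lra).
  replace (0 / (m + d)) with 0 by (field; lra). lra.
Qed.

Lemma Dphi_neg m n d : 0 < m < 1 -> 0 < d < m -> (1 <= n)%nat ->
  2 * m / (INR n + 2) < d -> Dphi m n d < 0.
Proof.
  intros Hm Hd Hn Hthr. destruct (Sq_facts m d Hm Hd) as (S0&S1&S2).
  assert (HN : 1 <= INR n) by (apply (le_INR 1); lia).
  unfold Dphi. set (S := Sq m d) in *. set (N := INR n) in *.
  assert (Hdk : 2 * m < d * (N + 2)).
  { apply Rmult_lt_reg_r with (/ (N+2)). apply Rinv_0_lt_compat; lra.
    replace (d * (N + 2) * / (N + 2)) with d by (field; lra). exact Hthr. }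
  assert (T1 : (d / S + 1) / ((1 + S - m + d) / 2) < 2 / d).
  { replace ((d / S + 1) / ((1 + S - m + d) / 2)) with ((d + S) / (S * ((1 + S - m + d) / 2))) by (field; lra).
    apply div_lt_div; try lra. apply Rmult_lt_0_compat; lra. nra. }
  assert (T2 : 0 < d / (2 * S) / ((1 + S) / 2)).
  { apply Rdiv_lt_0_compat; try lra. apply Rdiv_lt_0_compat; lra. }
  assert (T3 : 2 / d <= N / (m - d) + N / (m + d)).
  { replace (N / (m - d) + N / (m + d)) with ((2 * N * m) / ((m - d) * (m + d))) by (field; lra).
    apply div_le_div; try lra. apply Rmult_lt_0_compat; lra.
    assert (0 < (d*(N+2) - 2*m) * (d*(N+2) + 2*m + N*m*(N+2))).
    { apply Rmult_lt_0_compat; nra. }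
    assert (0 < (N+2)*(N+2)) by nra.
    assert (d*d + N*m*d - m*m >= 0).
    { assert ((N+2)*(N+2)*(d*d + N*m*d - m*m) >= 0) by nra. nra. }
    nra. }
  lra.
Qed.


Lemma decr_by_deriv (f df : R -> R) a b : a < b ->
  (forall x, a <= x <= b -> is_derive f x (df x)) ->
  (forall x, a <= x <= b -> df x < 0) -> f b < f a.
Proof.
  intros Hab Hd Hs.
  destruct (MVT_gen f a b df) as [c [Hc Heq]].
  - intros x Hx. rewrite Rmin_left in Hx by lra. rewrite Rmax_right in Hx by lra.
    apply Hd; lra.
  - intros x Hx. rewrite Rmin_left in Hx by lra. rewrite Rmax_right in Hx by lra.
    apply continuity_pt_filterlim. apply (@ex_derive_continuous R_AbsRing R_NormedModule). eexists; apply Hd; lra.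
  - rewrite Rmin_left in Hc by lra. rewrite Rmax_right in Hc by lra.
    assert (df c < 0) by (apply Hs; lra).
    assert (df c * (b - a) < 0). { apply Rmult_neg_pos; lra. } lra.
Qed.

Lemma incr_by_deriv (f df : R -> R) a b : a < b ->
  (forall x, a <= x <= b -> is_derive f x (df x)) ->
  (forall x, a <= x <= b -> 0 < df x) -> f a < f b.
Proof.
  intros Hab Hd Hs.
  destruct (MVT_gen f a b df) as [c [Hc Heq]].
  - intros x Hx. rewrite Rmin_left in Hx by lra. rewrite Rmax_right in Hx by lra.
    apply Hd; lra.
  - intros x Hx. rewrite Rmin_left in Hx by lra. rewrite Rmax_right in Hx by lra.
    apply continuity_pt_filterlim. apply (@ex_derive_continuous R_AbsRing R_NormedModule). eexists; apply Hd; lra.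
  - rewrite Rmin_left in Hc by lra. rewrite Rmax_right in Hc by lra.
    assert (0 < df c) by (apply Hs; lra).
    assert (0 < df c * (b - a)). { apply Rmult_lt_0_compat; lra. } lra.
Qed.

Definition mk (kappa : R) := 1 - / kappa.
Definition dg (g kappa : R) := mk kappa * (g - 1) / (g + 1).

Lemma Vgk_form pi0 g kappa e : 1 < g -> 1 < kappa ->
  0 < mk kappa < 1 /\ 0 < dg g kappa < mk kappa /\
  Vgk pi0 g kappa e = / (1 + (1 - pi0)/pi0 *
     Xf ((mk kappa + dg g kappa)/2) ((mk kappa - dg g kappa)/2) (Z.to_nat (Ncap e))).
Proof.
  intros Hg Hk.
  assert (Hi1 : 0 < / kappa < 1).
  { split. apply Rinv_0_lt_compat; lra. rewrite <- Rinv_1. apply Rinv_lt_contravar; lra. }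
  assert (Hm : 0 < mk kappa < 1) by (unfold mk; lra).
  assert (Hd : 0 < dg g kappa < mk kappa).
  { unfold dg. split. apply Rdiv_lt_0_compat; [apply Rmult_lt_0_compat|]; lra.
    apply Rmult_lt_reg_r with (g+1). lra.
    replace (mk kappa * (g - 1) / (g + 1) * (g + 1)) with (mk kappa * (g - 1)) by (field; lra).
    nra. }
  do 2 (split; [assumption|]).
  unfold Vgk. rewrite <- V_form; try lra.
  f_equal; unfold p_of, q_of, dg, mk; field; lra.
Qed.

Lemma Xf_lt_of_phi m n d1 d2 : 0 < m < 1 -> 0 < d1 < m -> 0 < d2 < m ->
  phi m n d1 < phi m n d2 ->
  Xf ((m + d1)/2) ((m - d1)/2) n < Xf ((m + d2)/2) ((m - d2)/2) n.
Proof.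
  intros Hm H1 H2 H. apply ln_lt_inv.
  apply Xf_pos; lra. apply Xf_pos; lra.
  rewrite !lnXf_phi by lra. lra.
Qed.

Lemma dg_mono g1 g2 kappa : 1 < kappa -> 1 < g1 -> g1 < g2 -> dg g1 kappa < dg g2 kappa.
Proof.
  intros Hk H1 H2.
  assert (Hi1 : 0 < / kappa < 1).
  { split. apply Rinv_0_lt_compat; lra. rewrite <- Rinv_1. apply Rinv_lt_contravar; lra. }
  assert (Hm : 0 < mk kappa < 1) by (unfold mk; lra).
  unfold dg. apply div_lt_div; try lra. nra.
Qed.

Lemma part2a pi0 : 0 < pi0 < 1 ->
  (forall (e : evidence) (kappa : R), 1 < kappa -> Ncap e = 0%Z ->
     forall g1 g2 : R, 1 < g1 -> g1 < g2 ->
       Vgk pi0 g2 kappa e < Vgk pi0 g1 kappa e).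
Proof.
  intros Hpi e k Hk HN g1 g2 H1 H12.
  destruct (Vgk_form pi0 g1 k e) as (Hm & Hd1 & E1); try lra.
  destruct (Vgk_form pi0 g2 k e) as (_ & Hd2 & E2); try lra.
  rewrite E1, E2, HN. simpl Z.to_nat.
  pose proof (dg_mono g1 g2 k Hk H1 H12).
  apply Vcmp. apply Rdiv_lt_0_compat; lra.
  apply Xf_pos; lra.
  apply Xf_lt_of_phi; try lra.
  apply (incr_by_deriv _ (Dphi (mk k) 0)); try lra.
  - intros x Hx. apply phi_deriv; lra.
  - intros x Hx. apply Dphi_pos0; lra.
Qed.

Definition ghat (e : evidence) : R := 1 + 4 / IZR (Ncap e).

Lemma part2b pi0 : 0 < pi0 < 1 ->
  (exists ghat : evidence -> R,
     (forall e : evidence, (0 < Ncap e)%Z -> 1 < ghat e) /\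
     (forall e : evidence, (0 < Ncap e)%Z ->
        forall kappa : R, 1 < kappa ->
        forall g1 g2 : R, ghat e < g1 -> g1 < g2 ->
          Vgk pi0 g1 kappa e < Vgk pi0 g2 kappa e) /\
     (forall eps : R, 0 < eps -> exists M : Z,
        forall e : evidence, (0 < Ncap e)%Z -> (M <= Ncap e)%Z ->
          Rabs (ghat e - 1) < eps)).
Proof.
  intros Hpi. exists ghat. split; [|split].
  - intros e He. unfold ghat. apply IZR_lt in He.
    assert (0 < 4 / IZR (Ncap e)) by (apply Rdiv_lt_0_compat; lra). lra.
  - intros e He k Hk g1 g2 H1 H12.
    assert (HNz : 0 < IZR (Ncap e)) by (apply IZR_lt in He; exact He).
    assert (Hg1 : 1 < g1).
    { unfold ghat in H1. assert (0 < 4 / IZR (Ncap e)) by (apply Rdiv_lt_0_compat; lra). lra. }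
    destruct (Vgk_form pi0 g1 k e) as (Hm & Hd1 & E1); try lra.
    destruct (Vgk_form pi0 g2 k e) as (_ & Hd2 & E2); try lra.
    rewrite E1, E2.
    set (n := Z.to_nat (Ncap e)).
    assert (HINR : INR n = IZR (Ncap e)).
    { unfold n. rewrite INR_IZR_INZ, Z2Nat.id; [reflexivity|lia]. }
    assert (Hn : (1 <= n)%nat) by (unfold n; lia).
    pose proof (dg_mono g1 g2 k Hk Hg1 H12).
    apply Vcmp. apply Rdiv_lt_0_compat; lra.
    apply Xf_pos; lra.
    apply Xf_lt_of_phi; try lra.
    apply (decr_by_deriv _ (Dphi (mk k) n)); try lra.
    + intros x Hx. apply phi_deriv; lra.
    + intros x Hx. apply Dphi_neg; try lra; try assumption.
      assert (Hthr : 2 * mk k / (INR n + 2) < dg g1 k).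
      { unfold dg. apply div_lt_div; try lra.
        rewrite HINR.
        unfold ghat in H1.
        assert (4 < (g1 - 1) * IZR (Ncap e)).
        { apply Rmult_lt_reg_r with (/ IZR (Ncap e)). apply Rinv_0_lt_compat; lra.
          replace ((g1 - 1) * IZR (Ncap e) * / IZR (Ncap e)) with (g1 - 1) by (field; lra).
          unfold Rdiv in H1. lra. }
        nra. }
      lra.
  - intros eps Heps. exists (up (4 / eps)). intros e He HM.
    destruct (archimed (4 / eps)) as [Ha _].
    apply IZR_le in HM.
    assert (HNz : 0 < IZR (Ncap e)) by (apply IZR_lt in He; exact He).
    unfold ghat. replace (1 + 4 / IZR (Ncap e) - 1) with (4 / IZR (Ncap e)) by ring.
    rewrite Rabs_right by (left; apply Rdiv_lt_0_compat; lra).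
    assert (4 / eps < IZR (Ncap e)) by lra.
    apply Rmult_lt_reg_r with (IZR (Ncap e) / eps). apply Rdiv_lt_0_compat; lra.
    replace (4 / IZR (Ncap e) * (IZR (Ncap e) / eps)) with (4 / eps) by (field; lra).
    replace (eps * (IZR (Ncap e) / eps)) with (IZR (Ncap e)) by (field; lra). lra.
Qed.


Ltac pos := repeat (first [lra | apply Rdiv_lt_0_compat | apply Rmult_lt_0_compat | apply pow_lt | nra]).

Definition gf q n a := -1/(1-a-q) + 1/(1-a) + 1/(q-a) - INR n/a + INR n/(1-a).
Definition psi q n a := ln (1-a-q) - ln (q-a) - ln (1-a) - INR n * ln a - INR n * ln (1-a).

Lemma psi_deriv q n a : 0 < q < 1/2 -> 0 < a < q -> is_derive (psi q n) a (gf q n a).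
Proof.
  intros Hq Ha. unfold psi, gf. auto_derive.
  - repeat split; lra.
  - field. repeat split; lra.
Qed.

Lemma alpha_facts p q : 0 < q < 1/2 -> 0 < p -> p + q < 1 ->
  let a := alpha p q in a * (1 - a) = p * q /\ 0 < a /\ a < q /\
  sqrt (1 - 4*p*q) = 1 - 2*a.
Proof.
  intros Hq Hp Hpq a.
  assert (Hpos : 0 < 1 - 4*p*q) by nra.
  assert (Hs : sqrt (1-4*p*q) * sqrt (1-4*p*q) = 1-4*p*q) by (apply sqrt_sqrt; lra).
  assert (Hs0 : 0 <= sqrt (1-4*p*q)) by (apply sqrt_pos).
  unfold a, alpha. set (s := sqrt (1-4*p*q)) in *.
  assert (s < 1) by nra.
  assert (1 - 2*q < s) by nra.
  repeat split.
  - replace ((1 - s) / 2 * (1 - (1 - s) / 2)) with ((1 - s*s)/4) by field. rewrite Hs. field.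
  - lra.
  - lra.
  - field.
Qed.

Lemma lnXf_psi p q n : 0 < q < 1/2 -> q < p -> p + q < 1 ->
  ln (Xf p q n) = psi q n (alpha p q) + (1 + 2 * INR n) * ln q.
Proof.
  intros Hq Hqp Hpq.
  destruct (alpha_facts p q Hq) as (Ha & Ha0 & Haq & Hs); try lra.
  unfold Xf, psi. rewrite Hs. set (a := alpha p q) in *. clearbody a.
  replace ((1 + (1 - 2 * a)) / 2) with (1 - a) by field.
  assert (Hp : p = a * (1 - a) / q) by (rewrite Ha; field; lra).
  assert (H1 : 0 < 1 - a - q) by lra.
  assert (H2 : 0 < 1 - a) by lra.
  assert (H3 : 0 < q - a) by lra.
  assert (E1 : 1 - p - q = (q - a) * (1 - a - q) / q) by (rewrite Hp; field; lra).
  assert (E2 : q / p = q * q / (a * (1 - a))) by (rewrite Hp; field; repeat split; lra).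
  rewrite E1, E2.
  rewrite (ln_mult ((1 - a - q) ^ 2 / ((1 - a) * ((q - a) * (1 - a - q) / q))) ((q * q / (a * (1 - a))) ^ n)).
  2: pos.
  2: pos.
  rewrite (ln_pow (q * q / (a * (1 - a))) n).
  2: pos.
  rewrite (ln_div (q*q) (a * (1-a))) by pos.
  rewrite (ln_mult q q) by lra. rewrite (ln_mult a (1-a)) by lra.
  rewrite (ln_div ((1 - a - q) ^ 2) ((1 - a) * ((q - a) * (1 - a - q) / q))).
  2: pos.
  2: pos.
  rewrite (ln_pow (1 - a - q) 2) by lra.
  rewrite (ln_mult (1 - a) ((q - a) * (1 - a - q) / q)).
  2: pos.
  rewrite (ln_div ((q - a) * (1 - a - q)) q) by pos.
  rewrite (ln_mult (q - a) (1 - a - q)) by lra.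
  simpl INR. ring.
  all: pos.
Qed.

Lemma gf_incr q n a1 a2 : 0 < q < 1/2 -> 0 < a1 -> a1 < a2 -> a2 < q ->
  gf q n a1 < gf q n a2.
Proof.
  intros Hq H1 H12 H2. unfold gf.
  assert (HN : 0 <= INR n) by apply pos_INR.
  assert (E1 : 1/(q-a2) - 1/(q-a1) = (a2-a1)/((q-a1)*(q-a2))) by (field; lra).
  assert (E2 : 1/(1-a2-q) - 1/(1-a1-q) = (a2-a1)/((1-a1-q)*(1-a2-q))) by (field; lra).
  assert (E3 : 1/(1-a2) - 1/(1-a1) = (a2-a1)/((1-a1)*(1-a2))) by (field; lra).
  assert (E4 : INR n/a1 - INR n/a2 = INR n * (a2-a1)/(a1*a2)) by (field; lra).
  assert (E5 : INR n/(1-a2) - INR n/(1-a1) = INR n * (a2-a1)/((1-a1)*(1-a2))) by (field; lra).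
  assert (C1 : (a2-a1)/((1-a1-q)*(1-a2-q)) < (a2-a1)/((q-a1)*(q-a2))).
  { apply div_lt_div; try pos. assert (0 < a2 - a1) by lra.
    assert ((q-a1)*(q-a2) < (1-a1-q)*(1-a2-q)).
    { assert (0 < q - a2) by lra. assert (q - a1 < 1-a1-q) by lra. assert (q-a2 < 1-a2-q) by lra.
      nra. }
    nra. }
  assert (C2 : 0 <= (a2-a1)/((1-a1)*(1-a2))) by (left; pos).
  assert (C3 : 0 <= INR n * (a2-a1)/(a1*a2)).
  { unfold Rdiv. apply Rmult_le_pos. apply Rmult_le_pos; lra. left. apply Rinv_0_lt_compat; pos. }
  assert (C4 : 0 <= INR n * (a2-a1)/((1-a1)*(1-a2))).
  { unfold Rdiv. apply Rmult_le_pos. apply Rmult_le_pos; lra. left. apply Rinv_0_lt_compat; pos. }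
  unfold Rminus in *. lra.
Qed.

Lemma gf_n_mono q n n' a : (n <= n')%nat -> 0 < a < 1/2 -> gf q n' a <= gf q n a.
Proof.
  intros Hn Ha. unfold gf.
  assert (INR n <= INR n') by (apply le_INR; exact Hn).
  assert (E : - INR n' / a + INR n' / (1 - a) - (- INR n / a + INR n / (1 - a))
            = (INR n' - INR n) * ((2*a - 1)/(a*(1-a)))) by (field; lra).
  assert ((2*a - 1)/(a*(1-a)) < 0).
  { unfold Rdiv. apply Rmult_neg_pos. lra. apply Rinv_0_lt_compat; pos. }
  assert ((INR n' - INR n) * ((2*a - 1)/(a*(1-a))) <= 0) by nra.
  unfold Rminus in *. lra.
Qed.

Definition a0 q := alpha q q.

Definition Sset q n a := a = a0 q \/ (a0 q < a < q /\ gf q n a < 0).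

Lemma Sset_bound q n : bound (Sset q n).
Proof.
  exists (Rmax q (a0 q)). intros x [->|[[_ H] _]].
  apply Rmax_r. left. apply Rlt_le_trans with q; [lra|apply Rmax_l].
Qed.

Lemma Sset_ne q n : exists x, Sset q n x.
Proof. exists (a0 q). left. reflexivity. Qed.

Definition astar q n : R := proj1_sig (completeness (Sset q n) (Sset_bound q n) (Sset_ne q n)).

Lemma astar_lub q n : is_lub (Sset q n) (astar q n).
Proof. unfold astar. destruct completeness as [x Hx]. exact Hx. Qed.

Lemma a0_facts q : 0 < q < 1/2 -> a0 q * (1 - a0 q) = q * q /\ 0 < a0 q /\ a0 q < q.
Proof.
  intros Hq. destruct (alpha_facts q q Hq) as (H1&H2&H3&_); try lra.
  unfold a0. auto.
Qed.

Lemma gf_pos_exists q n : 0 < q < 1/2 -> exists a1, a0 q < a1 < q /\ 0 < gf q n a1.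
Proof.
  intros Hq. destruct (a0_facts q Hq) as (A1&A2&A3).
  set (b := a0 q) in *.
  assert (HN : 0 <= INR n) by apply pos_INR.
  set (K := 1/(1-2*q) + INR n / b).
  assert (HK : 0 < K).
  { unfold K. assert (0 < 1/(1-2*q)) by pos. assert (0 <= INR n / b).
    { unfold Rdiv. apply Rmult_le_pos; [lra| left; apply Rinv_0_lt_compat; lra]. } lra. }
  set (delta := (q - b)/(2 + (q-b)*K)).
  assert (Hd0 : 0 < delta) by (unfold delta; pos).
  assert (Hd1 : delta < q - b).
  { unfold delta. apply Rmult_lt_reg_r with (2 + (q-b)*K). pos.
    replace ((q - b) / (2 + (q - b) * K) * (2 + (q - b) * K)) with (q - b) by (field; pos).
    assert (0 < (q-b)*((q-b)*K)) by pos. nra. }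
  exists (q - delta). split. lra.
  unfold gf.
  replace (q - (q - delta)) with delta by ring.
  assert (Hinv : 1/delta = 2/(q-b) + K) by (unfold delta; field; split; pos).
  assert (T1 : 1/(1 - (q - delta) - q) <= 1/(1-2*q)).
  { apply div_le_div; try lra. }
  assert (T2 : INR n / (q - delta) <= INR n / b).
  { apply div_le_div; try lra. nra. }
  assert (T3 : 0 < 1/(1 - (q - delta))) by pos.
  assert (T4 : 0 <= INR n / (1 - (q - delta))).
  { unfold Rdiv. apply Rmult_le_pos; [lra| left; apply Rinv_0_lt_compat; lra]. }
  assert (T5 : 0 < 2/(q-b)) by pos.
  unfold K in Hinv. unfold Rminus in *. unfold Rdiv in *. lra.
Qed.

Lemma astar_props q n : 0 < q < 1/2 ->
  a0 q <= astar q n /\ astar q n < q /\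
  (forall x, a0 q < x < astar q n -> gf q n x < 0) /\
  (forall x, astar q n < x < q -> 0 < gf q n x).
Proof.
  intros Hq. destruct (a0_facts q Hq) as (A1&A2&A3).
  destruct (astar_lub q n) as [Hub Hlub].
  destruct (gf_pos_exists q n Hq) as (a1 & Ha1 & Hg1).
  assert (L1 : a0 q <= astar q n) by (apply Hub; left; reflexivity).
  assert (L2 : astar q n <= a1).
  { apply Hlub. intros x [->|[Hx Hgx]]. lra.
    destruct (Rlt_or_le x a1) as [H|H]. lra.
    exfalso. destruct H as [H|H].
    - pose proof (gf_incr q n a1 x Hq ltac:(lra) H ltac:(lra)). lra.
    - subst. lra. }
  split; [exact L1|split; [lra|split]].
  - intros x Hx.
    destruct (classic (exists y, Sset q n y /\ x < y)) as [[y [Hy Hxy]]|Hno].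
    + destruct Hy as [->|[Hy Hgy]]. lra.
      pose proof (gf_incr q n x y Hq ltac:(lra) Hxy ltac:(lra)). lra.
    + exfalso. assert (astar q n <= x); [|lra].
      apply Hlub. intros y Hy. apply Rnot_lt_le. intros Hxy. apply Hno. eauto.
  - intros x Hx.
    set (z := (astar q n + x)/2).
    assert (Hz : ~ gf q n z < 0).
    { intros Hgz. assert (Sset q n z) by (right; unfold z; split; [lra|exact Hgz]).
      assert (z <= astar q n) by (apply Hub; assumption). unfold z in *; lra. }
    pose proof (gf_incr q n z x Hq ltac:(unfold z; lra) ltac:(unfold z; lra) ltac:(lra)). lra.
Qed.

Lemma astar_mono q n n' : 0 < q < 1/2 -> (n <= n')%nat -> astar q n <= astar q n'.
Proof.
  intros Hq Hn. destruct (a0_facts q Hq) as (A1&A2&A3).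
  destruct (astar_lub q n) as [_ Hlub]. destruct (astar_lub q n') as [Hub' _].
  apply Hlub. intros x [->|[Hx Hgx]].
  - apply Hub'. left. reflexivity.
  - apply Hub'. right. split. exact Hx.
    pose proof (gf_n_mono q n n' x Hn ltac:(lra)). lra.
Qed.

Lemma sq_mono x y : x <= y -> x + y <= 1 -> x * (1 - x) <= y * (1 - y).
Proof. intros. nra. Qed.
Lemma sq_mono_s x y : x < y -> x + y < 1 -> x * (1 - x) < y * (1 - y).
Proof. intros. nra. Qed.

Lemma Xf_lt_of_psi p1 p2 q n : 0 < q < 1/2 -> q < p1 -> p1 + q < 1 -> q < p2 -> p2 + q < 1 ->
  psi q n (alpha p1 q) < psi q n (alpha p2 q) -> Xf p1 q n < Xf p2 q n.
Proof.
  intros Hq H1 H1' H2 H2' H. apply ln_lt_inv.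
  apply Xf_pos; lra. apply Xf_pos; lra.
  rewrite !lnXf_psi by lra. lra.
Qed.

Lemma part3 pi0 : 0 < pi0 < 1 ->
  (forall q : R, 0 < q < 1 / 2 ->
     exists phat : evidence -> R,
       (forall e : evidence, q <= phat e < 1 - q) /\
       (forall e : evidence, forall p1 p2 : R,
          q < p1 -> p1 < p2 -> p2 < phat e ->
          V pi0 p1 q e < V pi0 p2 q e) /\
       (forall e : evidence, forall p1 p2 : R,
          phat e < p1 -> p1 < p2 -> p2 < 1 - q ->
          V pi0 p2 q e < V pi0 p1 q e) /\
       (forall e e' : evidence, (Ncap e <= Ncap e')%Z -> phat e <= phat e')).
Proof.
  intros Hpi q Hq.
  destruct (a0_facts q Hq) as (A1&A2&A3).
  assert (Hc : 0 < (1 - pi0)/pi0) by (apply Rdiv_lt_0_compat; lra).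
  exists (fun e => astar q (Z.to_nat (Ncap e)) * (1 - astar q (Z.to_nat (Ncap e))) / q).
  assert (Hb : forall e, q <= astar q (Z.to_nat (Ncap e)) * (1 - astar q (Z.to_nat (Ncap e))) / q
                          < 1 - q).
  { intros e. destruct (astar_props q (Z.to_nat (Ncap e)) Hq) as (P1&P2&_&_).
    set (A := astar q _) in *.
    pose proof (sq_mono (a0 q) A P1 ltac:(lra)).
    pose proof (sq_mono_s A q P2 ltac:(lra)).
    split.
    - apply Rmult_le_reg_r with q. lra.
      replace (A * (1 - A) / q * q) with (A * (1 - A)) by (field; lra). nra.
    - apply Rmult_lt_reg_r with q. lra.
      replace (A * (1 - A) / q * q) with (A * (1 - A)) by (field; lra). nra. }
  split; [exact Hb|split; [|split]].
  - intros e p1 p2 H1 H12 H2.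
    specialize (Hb e).
    destruct (astar_props q (Z.to_nat (Ncap e)) Hq) as (P1&P2&P3&_).
    set (n := Z.to_nat (Ncap e)) in *. set (A := astar q n) in *.
    assert (HpA : p2 * q < A * (1 - A)).
    { apply Rmult_lt_reg_r with (/ q). apply Rinv_0_lt_compat; lra.
      replace (p2 * q * / q) with p2 by (field; lra). exact H2. }
    destruct (alpha_facts p1 q Hq) as (B1&B2&B3&_); try lra.
    destruct (alpha_facts p2 q Hq) as (C1&C2&C3&_); try lra.
    set (a1 := alpha p1 q) in *. set (a2 := alpha p2 q) in *.
    assert (Ha1 : a0 q < a1).
    { destruct (Rlt_or_le (a0 q) a1) as [h|h]; [exact h|exfalso].
      pose proof (sq_mono a1 (a0 q) h ltac:(lra)). nra. }
    assert (Ha12 : a1 < a2).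
    { destruct (Rlt_or_le a1 a2) as [h|h]; [exact h|exfalso].
      pose proof (sq_mono a2 a1 h ltac:(lra)). nra. }
    assert (Ha2 : a2 < A).
    { destruct (Rlt_or_le a2 A) as [h|h]; [exact h|exfalso].
      pose proof (sq_mono A a2 h ltac:(lra)). nra. }
    rewrite !V_form by lra. fold n.
    apply Vcmp; [exact Hc| apply Xf_pos; lra|].
    apply Xf_lt_of_psi; try lra.
    fold a1 a2.
    apply (decr_by_deriv _ (gf q n)); try lra.
    + intros x Hx. apply psi_deriv; lra.
    + intros x Hx. apply P3; lra.
  - intros e p1 p2 H1 H12 H2.
    specialize (Hb e).
    destruct (astar_props q (Z.to_nat (Ncap e)) Hq) as (P1&P2&_&P4).
    set (n := Z.to_nat (Ncap e)) in *. set (A := astar q n) in *.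
    assert (HpA : A * (1 - A) < p1 * q).
    { apply Rmult_lt_reg_r with (/ q). apply Rinv_0_lt_compat; lra.
      replace (p1 * q * / q) with p1 by (field; lra). exact H1. }
    destruct (alpha_facts p1 q Hq) as (B1&B2&B3&_); try lra.
    destruct (alpha_facts p2 q Hq) as (C1&C2&C3&_); try lra.
    set (a1 := alpha p1 q) in *. set (a2 := alpha p2 q) in *.
    assert (Ha12 : a1 < a2).
    { destruct (Rlt_or_le a1 a2) as [h|h]; [exact h|exfalso].
      pose proof (sq_mono a2 a1 h ltac:(lra)). nra. }
    assert (Ha1 : A < a1).
    { destruct (Rlt_or_le A a1) as [h|h]; [exact h|exfalso].
      pose proof (sq_mono a1 A h ltac:(lra)). nra. }
    rewrite !V_form by lra. fold n.
    apply Vcmp; [exact Hc| apply Xf_pos; lra|].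
    apply Xf_lt_of_psi; try lra.
    fold a1 a2.
    apply (incr_by_deriv _ (gf q n)); try lra.
    + intros x Hx. apply psi_deriv; lra.
    + intros x Hx. apply P4; lra.
  - intros e e' He.
    assert (Hn : (Z.to_nat (Ncap e) <= Z.to_nat (Ncap e'))%nat) by lia.
    pose proof (astar_mono q _ _ Hq Hn).
    destruct (astar_props q (Z.to_nat (Ncap e')) Hq) as (P1&P2&_&_).
    destruct (astar_props q (Z.to_nat (Ncap e)) Hq) as (Q1&Q2&_&_).
    apply Rmult_le_compat_r. left; apply Rinv_0_lt_compat; lra.
    apply sq_mono; lra.
Qed.

Theorem proposition7 :
  forall pi0 : R, 0 < pi0 < 1 ->
  (* (1) decreasing in kappa, gamma fixed *)
  (forall (e : evidence) (gamma : R), 1 < gamma ->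
     forall k1 k2 : R, 1 < k1 -> k1 < k2 ->
       Vgk pi0 gamma k2 e < Vgk pi0 gamma k1 e)
  /\
  (* (2a) N(e) = 0: decreasing in gamma, kappa fixed *)
  (forall (e : evidence) (kappa : R), 1 < kappa -> Ncap e = 0%Z ->
     forall g1 g2 : R, 1 < g1 -> g1 < g2 ->
       Vgk pi0 g2 kappa e < Vgk pi0 g1 kappa e)
  /\
  (* (2b) N(e) > 0: threshold ghat(e) > 1, increasing in gamma beyond it
     for every kappa > 1, and ghat -> 1 as N(e) -> infinity *)
  (exists ghat : evidence -> R,
     (forall e : evidence, (0 < Ncap e)%Z -> 1 < ghat e) /\
     (forall e : evidence, (0 < Ncap e)%Z ->
        forall kappa : R, 1 < kappa ->
        forall g1 g2 : R, ghat e < g1 -> g1 < g2 ->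
          Vgk pi0 g1 kappa e < Vgk pi0 g2 kappa e) /\
     (forall eps : R, 0 < eps -> exists M : Z,
        forall e : evidence, (0 < Ncap e)%Z -> (M <= Ncap e)%Z ->
          Rabs (ghat e - 1) < eps))
  /\
  (* (3) single-peakedness in p for fixed q in (0,1/2) *)
  (forall q : R, 0 < q < 1 / 2 ->
     exists phat : evidence -> R,
       (forall e : evidence, q <= phat e < 1 - q) /\
       (forall e : evidence, forall p1 p2 : R,
          q < p1 -> p1 < p2 -> p2 < phat e ->
          V pi0 p1 q e < V pi0 p2 q e) /\
       (forall e : evidence, forall p1 p2 : R,
          phat e < p1 -> p1 < p2 -> p2 < 1 - q ->
          V pi0 p2 q e < V pi0 p1 q e) /\
       (forall e e' : evidence, (Ncap e <= Ncap e')%Z -> phat e <= phat e')).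
Proof.
  intros pi0 Hpi.
  split; [exact (part1 pi0 Hpi)|].
  split; [exact (part2a pi0 Hpi)|].
  split; [exact (part2b pi0 Hpi)|].
  exact (part3 pi0 Hpi).
Qed.
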